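(* Let $ABC$ be a nondegenerate triangle and $XYZ$ a Miquel triangle of a point $P$ relative to $ABC$. (i) If $P$ is the first Brocard point of $ABC$, then $P$ is the first Brocard point of $XYZ$, i.e. $\angle YXP=\angle ZYP=\angle XZP$. (ii) If $P$ is the second Brocard point of $ABC$, then $P$ is the second Brocard point of $XYZ$, i.e. $\angle PXZ=\angle PYX=\angle PZY$.
   Context: Miquel triangle: given a triangle $ABC$ and a point $P$ not on the lines $BC,CA,AB$, a triangle $XYZ$ with $X$ on line $BC$, $Y$ on line $CA$, $Z$ on line $AB$ is called a Miquel triangle of $P$ relative to $ABC$ if $P$ lies on each of the three circles through $A,Y,Z$, through $B,Z,X$, and through $C,X,Y$. First Brocard point of $ABC$: the point $P$ with $\angle BAP=\angle CBP=\angle ACP$; second Brocard point: the point $P$ with $\angle PAC=\angle PBA=\angle PCB$ (analogously for a triangle $XYZ$ with the vertex order $X,Y,Z$ in place of $A,B,C$). *)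

(* Defs.v *)
From Stdlib Require Import Reals Lra.
Open Scope R_scope.

Definition point : Type := (R * R)%type.

Definition vx (A B : point) : R := fst B - fst A.
Definition vy (A B : point) : R := snd B - snd A.

Definition cross3 (A B C : point) : R := vx A B * vy A C - vy A B * vx A C.
Definition dot3 (A B C : point) : R := vx A B * vx A C + vy A B * vy A C.

Definition dist2 (A B : point) : R := vx A B ^ 2 + vy A B ^ 2.

Definition collinear (A B C : point) : Prop := cross3 A B C = 0.

Definition nondeg (A B C : point) : Prop := ~ collinear A B C.

(* X lies on the line through B and C (B <> C assumed elsewhere) *)
Definition on_line (X B C : point) : Prop := collinear B C X.

Definition concyclic (A B C D : point) : Prop :=
  exists (O : point) (r : R), 0 < r /\
    dist2 O A = r /\ dist2 O B = r /\ dist2 O C = r /\ dist2 O D = r.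

(* Directed angles of lines, modulo pi.
   dangle_eq O1 U1 V1 O2 U2 V2 means: the directed angle from line O1U1 to
   line O1V1 equals the directed angle from line O2U2 to line O2V2 (mod pi),
   i.e. the rotations have equal tangent: cross1*dot2 = dot1*cross2.
   (Used only with nonzero vectors.) *)
Definition dangle_eq (O1 U1 V1 O2 U2 V2 : point) : Prop :=
  cross3 O1 U1 V1 * dot3 O2 U2 V2 = dot3 O1 U1 V1 * cross3 O2 U2 V2.

(* First Brocard point: angle BAP = angle CBP = angle ACP
   (directed: from AB to AP, from BC to BP, from CA to CP). *)
Definition first_brocard (A B C P : point) : Prop :=
  dangle_eq A B P B C P /\ dangle_eq B C P C A P.

(* Second Brocard point: angle PAC = angle PBA = angle PCB
   (directed: from AP to AC, from BP to BA, from CP to CB). *)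
Definition second_brocard (A B C P : point) : Prop :=
  dangle_eq A P C B P A /\ dangle_eq B P A C P B.

(* XYZ is a Miquel triangle of P relative to ABC. The circles through A,Y,Z
   etc. are required to exist, i.e. X,Y,Z are distinct from the vertices. *)
Definition miquel_triangle (A B C P X Y Z : point) : Prop :=
  on_line X B C /\ on_line Y C A /\ on_line Z A B /\
  X <> B /\ X <> C /\ Y <> C /\ Y <> A /\ Z <> A /\ Z <> B /\
  X <> Y /\ Y <> Z /\ Z <> X /\
  concyclic A Y Z P /\ concyclic B Z X P /\ concyclic C X Y P.

(* Main.v *)
Require Import Defs.
From Stdlib Require Import Reals Lra.
Open Scope R_scope.

Lemma ref1 (O U V Q : point) r :
  cross3 U V Q * (r + dot3 O V Q) - dot3 U V Q * cross3 O V Q =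
   vx O U*(vy O Q*(dist2 O V - r) - vy O V*(dist2 O Q - r)) + vy O U*(-vx O Q*(dist2 O V - r)+vx O V*(dist2 O Q - r)) - (dist2 O U - r)*cross3 O V Q.
Proof. unfold cross3, dot3, dist2, vx, vy; ring. Qed.

Lemma ref2 (O U V Q : point) r :
  cross3 U V Q * cross3 O V Q - dot3 U V Q * (r - dot3 O V Q) =
   vx O U*(-vx O Q*(dist2 O V - r) - vx O V*(dist2 O Q - r)) + vy O U*(-vy O Q*(dist2 O V - r) - vy O V*(dist2 O Q - r))
   + (dist2 O V - r)*(dist2 O Q - r) + r*(dist2 O V - r) + r*(dist2 O Q - r) - (dist2 O U - r)*(r - dot3 O V Q).
Proof. unfold cross3, dot3, dist2, vx, vy; ring. Qed.

Lemma par_trans c1 d1 c2 d2 c3 d3 :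
  c1*d2 = d1*c2 -> c2*d3 = d2*c3 -> (c2 <> 0 \/ d2 <> 0) -> c1*d3 = d1*c3.
Proof.
  intros h1 h2 hn.
  assert (e1 : (c1*d3 - d1*c3)*c2 = 0).
  { replace ((c1*d3 - d1*c3)*c2) with (c1*(c2*d3) - d1*c3*c2) by ring.
    rewrite h2. replace (c1*(d2*c3) - d1*c3*c2) with (c3*(c1*d2 - d1*c2)) by ring.
    rewrite h1; ring. }
  assert (e2 : (c1*d3 - d1*c3)*d2 = 0).
  { replace ((c1*d3 - d1*c3)*d2) with (c1*d2*d3 - d1*(d2*c3)) by ring.
    rewrite <- h2. replace (c1*d2*d3 - d1*(c2*d3)) with (d3*(c1*d2 - d1*c2)) by ring.
    rewrite h1; ring. }
  destruct hn as [hn|hn].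
  - apply Rmult_integral in e1; destruct e1 as [e|e]; [lra|contradiction].
  - apply Rmult_integral in e2; destruct e2 as [e|e]; [lra|contradiction].
Qed.

Lemma dist2_pos (O U : point) : O <> U -> 0 < dist2 O U.
Proof.
  destruct O as [o1 o2], U as [u1 u2]; unfold dist2, vx, vy; simpl; intro h.
  destruct (Req_dec (u1-o1) 0) as [a|a]; destruct (Req_dec (u2-o2) 0) as [b|b].
  - exfalso; apply h; f_equal; lra.
  - pose proof (Rsqr_pos_lt (u2-o2) ltac:(assumption)); unfold Rsqr in *. nra.
  - pose proof (Rsqr_pos_lt (u1-o1) ltac:(assumption)); unfold Rsqr in *. nra.
  - pose proof (Rsqr_pos_lt (u2-o2) ltac:(assumption)); unfold Rsqr in *. nra.
Qed.

Lemma nz (O U V : point) : O <> U -> O <> V -> cross3 O U V <> 0 \/ dot3 O U V <> 0.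
Proof.
  intros h1 h2. pose proof (dist2_pos _ _ h1). pose proof (dist2_pos _ _ h2).
  assert (E : cross3 O U V ^2 + dot3 O U V ^2 = dist2 O U * dist2 O V)
    by (unfold cross3, dot3, dist2; ring).
  destruct (Req_dec (cross3 O U V) 0) as [a|a]; [|left; auto].
  destruct (Req_dec (dot3 O U V) 0) as [b|b]; [|right; auto].
  rewrite a, b in E. nra.
Qed.

Lemma dtrans O1 U1 V1 O2 U2 V2 O3 U3 V3 :
  dangle_eq O1 U1 V1 O2 U2 V2 -> dangle_eq O2 U2 V2 O3 U3 V3 -> O2 <> U2 -> O2 <> V2 ->
  dangle_eq O1 U1 V1 O3 U3 V3.
Proof.
  unfold dangle_eq; intros h1 h2 a b. eapply par_trans; [exact h1|exact h2|].
  apply nz; auto.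
Qed.

Lemma dsym O1 U1 V1 O2 U2 V2 :
  dangle_eq O1 U1 V1 O2 U2 V2 -> dangle_eq O2 U2 V2 O1 U1 V1.
Proof. unfold dangle_eq; intro h; lra. Qed.

Lemma dswap O1 U1 V1 O2 U2 V2 :
  dangle_eq O1 U1 V1 O2 U2 V2 -> dangle_eq O1 V1 U1 O2 V2 U2.
Proof.
  unfold dangle_eq; intro h.
  replace (cross3 O1 V1 U1) with (- cross3 O1 U1 V1) by (unfold cross3; ring).
  replace (cross3 O2 V2 U2) with (- cross3 O2 U2 V2) by (unfold cross3; ring).
  replace (dot3 O1 V1 U1) with (dot3 O1 U1 V1) by (unfold dot3; ring).
  replace (dot3 O2 V2 U2) with (dot3 O2 U2 V2) by (unfold dot3; ring).
  lra.
Qed.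

Lemma col_repl O U U' V : cross3 O U U' = 0 -> dangle_eq O U V O U' V.
Proof.
  unfold dangle_eq; intro h.
  assert (E : cross3 O U V * dot3 O U' V - dot3 O U V * cross3 O U' V = cross3 O U U' * dist2 O V)
    by (unfold cross3, dot3, dist2, vx, vy; ring).
  rewrite h in E. lra.
Qed.

Lemma col_repl' O U U' V : cross3 O U' U = 0 -> dangle_eq O U V O U' V.
Proof.
  intro h. apply col_repl.
  replace (cross3 O U U') with (- cross3 O U' U) by (unfold cross3; ring). lra.
Qed.

Lemma insc (O : point) r U V W Q : 0 < r ->
  dist2 O U = r -> dist2 O V = r -> dist2 O W = r -> dist2 O Q = r ->
  dangle_eq U V Q W V Q.
Proof.
  intros hr hU hV hW hQ. unfold dangle_eq.
  pose proof (ref1 O U V Q r) as a1. pose proof (ref1 O W V Q r) as b1.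
  pose proof (ref2 O U V Q r) as a2. pose proof (ref2 O W V Q r) as b2.
  rewrite hU, hV, hQ in a1, a2. rewrite hW, hV, hQ in b1, b2.
  destruct (Req_dec (r + dot3 O V Q) 0) as [e|e].
  - apply par_trans with (r - dot3 O V Q) (cross3 O V Q); [lra| |left; lra].
    lra.
  - apply par_trans with (cross3 O V Q) (r + dot3 O V Q); [lra| |right; lra].
    lra.
Qed.

Lemma col_perm (A B C : point) : cross3 A B C = 0 -> cross3 B A C = 0.
Proof.
  intro h. replace (cross3 B A C) with (- cross3 A B C) by (unfold cross3, vx, vy; ring). lra.
Qed.

Lemma neq_of (P B C : point) : ~ on_line P B C -> P <> B /\ P <> C.
Proof.
  unfold on_line, collinear; intro h; split; intro e; subst; apply h;
  unfold cross3, vx, vy; ring.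
Qed.

Lemma neq_on (X P B C : point) : on_line X B C -> ~ on_line P B C -> X <> P.
Proof. intros h1 h2 e; subst; auto. Qed.

Lemma nondeg_neq A B C : nondeg A B C -> A <> B /\ B <> C /\ C <> A.
Proof.
  unfold nondeg, collinear; intro h; repeat split; intro e; subst; apply h;
  unfold cross3, vx, vy; ring.
Qed.

Theorem theorem8 (A B C P X Y Z : point) :
  nondeg A B C ->
  ~ on_line P B C -> ~ on_line P C A -> ~ on_line P A B ->
  miquel_triangle A B C P X Y Z ->
  (first_brocard A B C P -> first_brocard X Y Z P) /\
  (second_brocard A B C P -> second_brocard X Y Z P).
Proof.
  intros hnd hBC hCA hAB hm.
  destruct (nondeg_neq _ _ _ hnd) as [nAB [nBC nCA]].
  destruct (neq_of _ _ _ hBC) as [nPB nPC].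
  destruct (neq_of _ _ _ hCA) as [_ nPA].
  destruct hm as (xl & yl & zl & nXB & nXC & nYC & nYA & nZA & nZB & nXY & nYZ & nZX &
    (O1 & r1 & hr1 & c1 & c2 & c3 & c4) & (O2 & r2 & hr2 & d1 & d2 & d3 & d4) &
    (O3 & r3 & hr3 & e1 & e2 & e3 & e4)).
  assert (nXP := neq_on _ _ _ _ xl hBC).
  assert (nYP := neq_on _ _ _ _ yl hCA).
  assert (nZP := neq_on _ _ _ _ zl hAB).
  unfold on_line, collinear in xl, yl, zl.
  split.
  - intros [H1 H2]. unfold first_brocard.
    assert (s5 : dangle_eq A Z P Y Z P) by (exact (insc O1 r1 A Z Y P hr1 c1 c3 c2 c4)).
    assert (s4 : dangle_eq A B P A Z P) by (apply col_repl; exact zl).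
    assert (s3 : dangle_eq C A P A B P)
      by (apply dsym; eapply dtrans; [exact H1|exact H2|auto|auto]).
    assert (s2 : dangle_eq C Y P C A P) by (apply col_repl'; exact yl).
    assert (s1 : dangle_eq X Y P C Y P) by (exact (insc O3 r3 X Y C P hr3 e2 e3 e1 e4)).
    assert (t1 : dangle_eq B C P B X P) by (apply col_repl; exact xl).
    assert (t2 : dangle_eq B X P Z X P) by (exact (insc O2 r2 B X Z P hr2 d1 d3 d2 d4)).
    split.
    + eapply dtrans; [exact s1| |auto|auto].
      eapply dtrans; [exact s2| |auto|auto].
      eapply dtrans; [exact s3| |auto|auto].
      eapply dtrans; [exact s4| |auto|auto]. exact s5.
    + eapply dtrans; [apply dsym; exact s5| |auto|auto].
      eapply dtrans; [apply dsym; exact s4| |auto|auto].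
      eapply dtrans; [exact H1| |auto|auto].
      eapply dtrans; [exact t1| |auto|auto]. exact t2.
  - intros [H1 H2]. unfold second_brocard.
    assert (u1 : dangle_eq X P Z B P Z)
      by (apply dswap; exact (insc O2 r2 X Z B P hr2 d3 d2 d1 d4)).
    assert (u2 : dangle_eq B P Z B P A)
      by (apply dswap; apply col_repl'; apply col_perm; exact zl).
    assert (u3 : dangle_eq B P A C P B) by exact H2.
    assert (u4 : dangle_eq C P B C P X)
      by (apply dswap; apply col_repl; apply col_perm; exact xl).
    assert (u5 : dangle_eq C P X Y P X)
      by (apply dswap; exact (insc O3 r3 C X Y P hr3 e1 e2 e3 e4)).
    assert (w1 : dangle_eq C P B A P C)
      by (apply dsym; eapply dtrans; [exact H1|exact H2|auto|auto]).
    assert (w2 : dangle_eq A P C A P Y)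
      by (apply dswap; apply col_repl; apply col_perm; exact yl).
    assert (w3 : dangle_eq A P Y Z P Y)
      by (apply dswap; exact (insc O1 r1 A Y Z P hr1 c1 c2 c3 c4)).
    split.
    + eapply dtrans; [exact u1| |auto|auto].
      eapply dtrans; [exact u2| |auto|auto].
      eapply dtrans; [exact u3| |auto|auto].
      eapply dtrans; [exact u4| |auto|auto]. exact u5.
    + eapply dtrans; [apply dsym; exact u5| |auto|auto].
      eapply dtrans; [apply dsym; exact u4| |auto|auto].
      eapply dtrans; [exact w1| |auto|auto].
      eapply dtrans; [exact w2| |auto|auto]. exact w3.
Qed.
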